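(* Let $k$ be an integer and let $G$ be a finite graph (parallel edges allowed, no loops) with $\Delta(G)\le k$. Then $\Gamma(G)\le k$ if and only if $2|E(G[U])|\le k(|U|-1)$ for every set $U\subseteq V(G)$ such that $|U|$ is odd, $|U|\ge 3$, and the underlying simple graph of $G[U]$ has no vertices of degree at most one.
   Context: $\Delta(G)$ is the maximum degree of $G$ (counting parallel edges with multiplicity). $G[U]$ is the subgraph induced by $U$, and $|E(G[U])|$ counts edges with multiplicity. $\Gamma(G)=\max\{2|E(G[U])|/(|U|-1): U\subseteq V(G),\ |U|\ge 3,\ |U| \text{ odd}\}$. The underlying simple graph of a graph is obtained by replacing each class of parallel edges by a single edge. *)

(* Defs.v *)
(* A finite multigraph (parallel edges allowed) is given by a
   finite vertex type T, a finite edge type E and endpoint maps src tgt : E -> T;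
   "no loops" is the hypothesis forall e, src e != tgt e. *)
From mathcomp Require Import all_boot all_order all_algebra.
Set Implicit Arguments. Unset Strict Implicit. Unset Printing Implicit Defensive.
Import Order.TTheory GRing.Theory Num.Theory.

Section MG.
Variables (T E : finType) (src tgt : E -> T).

Definition mdeg (v : T) : nat := #|[set e : E | (src e == v) || (tgt e == v)]|.

Definition maxdeg : nat := \max_(v : T) mdeg v.

Definition nedges_in (U : {set T}) : nat :=
  #|[set e : E | (src e \in U) && (tgt e \in U)]|.

Definition sadj (x y : T) : bool :=
  [exists e : E, ((src e == x) && (tgt e == y)) || ((src e == y) && (tgt e == x))].

Definition sdeg_in (U : {set T}) (x : T) : nat := #|[set y in U | sadj x y]|.

(* Gamma(G) = max { 2|E(G[U])| / (|U|-1) : U odd, |U| >= 3 }, as a rational;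
   convention: 0 if there is no such U. *)
Definition Gamma : rat :=
  \big[Order.max/0%R]_(U : {set T} | odd #|U| && (3 <= #|U|))
     (((2 * nedges_in U)%:R / (#|U| - 1)%:R)%R : rat).

End MG.

(* Main.v *)
Require Import Defs.
From mathcomp Require Import all_boot all_order all_algebra.
From mathcomp Require Import zify.
Import Order.TTheory GRing.Theory Num.Theory.

Section Aux.
Variables (T E : finType) (src tgt : E -> T).
Hypothesis noloop : forall e : E, src e != tgt e.

Lemma term_equiv (U : {set T}) (k : int) : 3 <= #|U| ->
  ((((2 * nedges_in src tgt U)%N)%:R / (#|U| - 1)%:R : rat) <= k%:~R)%R =
  (((2 * nedges_in src tgt U)%N)%:Z <= k * ((#|U| - 1)%N)%:Z)%R.
Proof.
move=> H3.
have hp : (0 < (#|U| - 1)%:R :> rat)%R by rewrite ltr0n subn_gt0 (leq_trans _ H3).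
rewrite ler_pdivrMr // -(ler_int rat).
by rewrite rmorphM /= -!pmulrn.
Qed.

Lemma nedges_small (U : {set T}) : #|U| <= 1 -> nedges_in src tgt U = 0.
Proof.
move=> H1; apply/eqP; rewrite cards_eq0; apply/eqP/setP => e.
rewrite !inE; apply/negbTE/negP => /andP[hs ht].
have : [set src e; tgt e] \subset U by apply/subsetP => z; rewrite !inE => /orP[]/eqP->.
move/subset_leq_card; rewrite cards2 noloop => H2.
by have := leq_trans H2 H1.
Qed.

Lemma nedges_remove (U : {set T}) x y :
  (forall z, z \in U -> z != y -> ~~ sadj src tgt x z) ->
  nedges_in src tgt U <= nedges_in src tgt (U :\ x :\ y) + mdeg src tgt y.
Proof.
move=> Hxz.
rewrite /nedges_in /mdeg; apply: leq_trans (leq_card_setU _ _); apply: subset_leq_card.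
apply/subsetP => e; rewrite !inE => /andP[hs ht].
case: (eqVneq (src e) y) => [sy|sy]; first by rewrite sy ?eqxx ?orbT.
case: (eqVneq (tgt e) y) => [ty|ty]; first by rewrite ty ?eqxx ?orbT.
case: (eqVneq (src e) x) => [sx|sx].
  have := Hxz _ ht ty; case/negP; apply/existsP; exists e.
  by rewrite sx ?eqxx.
case: (eqVneq (tgt e) x) => [tx|tx].
  have := Hxz _ hs sy; case/negP; apply/existsP; exists e.
  by rewrite tx ?eqxx ?orbT.
by rewrite hs ht.
Qed.

End Aux.

Theorem lemma5 (T E : finType) (src tgt : E -> T)
    (noloop : forall e : E, src e != tgt e) (k : int)
    (hDelta : ((maxdeg src tgt)%:Z <= k)%R) :
  (Gamma src tgt <= k%:~R)%R <->
  (forall U : {set T}, odd #|U| -> 3 <= #|U| ->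
     (forall x, x \in U -> 2 <= sdeg_in src tgt U x) ->
     (((2 * nedges_in src tgt U)%N)%:Z <= k * ((#|U| - 1)%N)%:Z)%R).
Proof.
have k0 : (0 <= k)%R by apply: le_trans hDelta.
split.
  move=> HG U hodd h3 _; rewrite -term_equiv //; apply: le_trans HG.
  rewrite /Gamma; apply: (@le_bigmax_cond _ _ _ 0%R U (fun U0 : {set T} => odd #|U0| && (3 <= #|U0|))).
  by rewrite hodd h3.
move=> Hcore.
suff main : forall n (U : {set T}), #|U| <= n -> odd #|U| -> 3 <= #|U| ->
     (((2 * nedges_in src tgt U)%N)%:Z <= k * ((#|U| - 1)%N)%:Z)%R.
  apply: bigmax_le; first by rewrite ler0z.
  by move=> U /andP[hodd h3]; rewrite term_equiv // (main #|U|).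
elim=> [|n IH] U hn hodd h3; first by move: (leq_trans h3 hn).
case: (boolP [forall x in U, 2 <= sdeg_in src tgt U x]) => [/forall_inP|].
  by move=> hall; apply: Hcore.
rewrite negb_forall_in => /exists_inP[x xU]; rewrite -ltnNge ltnS => hx.
have [y [yU yx Hy]] : exists y, [/\ y \in U, y != x &
    forall z, z \in U -> z != y -> ~~ sadj src tgt x z].
  have sxx : ~~ sadj src tgt x x.
    apply/existsP => -[e]; rewrite orbb => /andP[/eqP h1 /eqP h2].
    by move: (noloop e); rewrite h1 h2 eqxx.
  move: hx; rewrite /sdeg_in leq_eqVlt ltnS leqn0 cards_eq0 => /orP[/cards1P[y0 hS]|/eqP hS].
    have : y0 \in [set y in U | sadj src tgt x y] by rewrite hS set11.
    rewrite inE => /andP[y0U sxy0].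
    exists y0; split => //.
      by apply/eqP => h; rewrite h (negbTE sxx) in sxy0.
    move=> z zU zy; apply/negP => sxz.
    have : z \in [set y in U | sadj src tgt x y] by rewrite inE zU.
    by rewrite hS inE (negbTE zy).
  have : 0 < #|U :\ x| by rewrite (cardsD1 x U) xU in h3; move: h3; rewrite /=; lia.
  rewrite card_gt0 => /set0Pn[y]; rewrite !inE => /andP[yx yU].
  exists y; split => // z zU _; apply/negP => sxz.
  have : z \in [set y in U | sadj src tgt x y] by rewrite inE zU.
  by rewrite hS inE.
set U' := U :\ x :\ y.
have cU' : #|U'| + 2 = #|U|.
  have h1 := cardsD1 x U; have h2 := cardsD1 y (U :\ x).
  rewrite xU in h1; rewrite !inE yx yU in h2; rewrite /U'; lia.
have Hrem := @nedges_remove T E src tgt U x y Hy.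
have Hdy : mdeg src tgt y <= maxdeg src tgt by apply: (leq_bigmax y).
have hoddU' : odd #|U'| by move: hodd; rewrite -cU' addn2 /= negbK.
have Hk2 : (k * ((#|U| - 1)%N)%:Z = k * ((#|U'| - 1)%N)%:Z + 2 * k)%R.
  rewrite -cU'; have -> : (#|U'| + 2 - 1 = (#|U'| - 1) + 2)%N.
    by case: #|U'| hoddU' => [|m] //= _; lia.
  rewrite PoszD mulrDr; lia.
rewrite Hk2.
case: (leqP 3 #|U'|) => h3'.
  have := IH U' ltac:(lia) hoddU' h3'.
  rewrite -/U' in Hrem; move: Hrem Hdy hDelta; lia.
have h1 : #|U'| <= 1 by move: h3' hoddU'; case: #|U'| => [|[|[|]]].
rewrite -/U' (@nedges_small T E src tgt noloop U' h1) in Hrem.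
have -> : (#|U'| - 1 = 0)%N by lia.
move: Hrem Hdy hDelta; lia.
Qed.
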